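(* Let $n\ge 4$. The twisted braid group $\mathcal{TB}_n$ has the following reduced presentation: it is isomorphic to the group $$G=\langle\, \sigma_1, b_1, v_1,\dots,v_{n-1} \mid R\,\rangle$$ where $R$ consists of the relations $v_iv_{i+1}v_i=v_{i+1}v_iv_{i+1}$ ($1\le i\le n-2$), $v_iv_j=v_jv_i$ ($|i-j|\ge2$), $v_i^2=1$ ($1\le i\le n-1$), $\sigma_1v_j=v_j\sigma_1$ ($j>2$), $b_1^2=1$, $b_1v_j=v_jb_1$ ($j>1$), $(v_1\sigma_1v_1)(v_2\sigma_1v_2)(v_1\sigma_1v_1)=(v_2\sigma_1v_2)(v_1\sigma_1v_1)(v_2\sigma_1v_2)$, $\sigma_1(v_2v_3v_1v_2\sigma_1v_2v_1v_3v_2)=(v_2v_3v_1v_2\sigma_1v_2v_1v_3v_2)\sigma_1$, $b_1(v_1b_1v_1)=(v_1b_1v_1)b_1$, $\sigma_1(v_2v_1b_1v_1v_2)=(v_2v_1b_1v_1v_2)\sigma_1$, $(v_1b_1v_1)b_1\sigma_1b_1(v_1b_1v_1)=v_1\sigma_1v_1$. The isomorphism $G\to\mathcal{TB}_n$ sends $\sigma_1, b_1, v_1,\dots,v_{n-1}$ to the elements of the same names, and its inverse sends $v_i\mapsto v_i$, $\sigma_1\mapsto\sigma_1$, $b_1\mapsto b_1$, $\sigma_{i+1}\mapsto (v_i\cdots v_2v_1)(v_{i+1}\cdots v_3v_2)\sigma_1(v_2v_3\cdots v_{i+1})(v_1v_2\cdots v_i)$ for $1\le i\le n-2$, and $b_{i+1}\mapsto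 (v_iv_{i-1}\cdots v_1)b_1(v_1v_2\cdots v_i)$ for $1\le i\le n-1$.
   Context: The twisted braid group $\mathcal{TB}_n$ (the group of isotopy classes of twisted braids on $n$ strands, i.e. braids on $n$ strands with classical crossings, virtual crossings and bars on strands, under braid concatenation) is the group with generators $\sigma_1,\dots,\sigma_{n-1}$ (classical crossing of strands $i,i+1$), $v_1,\dots,v_{n-1}$ (virtual crossing of strands $i,i+1$) and $b_1,\dots,b_n$ (a bar on strand $i$), subject to the relations: braid relations $\sigma_i\sigma_{i+1}\sigma_i=\sigma_{i+1}\sigma_i\sigma_{i+1}$ ($1\le i\le n-2$), $\sigma_i\sigma_j=\sigma_j\sigma_i$ ($|i-j|\ge2$); virtual relations $v_i^2=1$, $v_iv_j=v_jv_i$ ($|i-j|\ge2$), $v_iv_{i+1}v_i=v_{i+1}v_iv_{i+1}$; twisted relations $b_i^2=1$ ($1\le i\le n$), $b_ib_j=b_jb_i$ ($i\ne j$); mixed relations $\sigma_iv_j=v_j\sigma_i$ ($|i-j|\ge2$), $v_i\sigma_{i+1}v_i=v_{i+1}\sigma_iv_{i+1}$ ($1\le i\le n-2$), $b_iv_i=v_ib_{i+1}$ ($1\le i\le n-1$), $b_ib_{i+1}\sigma_ib_{i+1}b_i=v_i\sigma_iv_i$ ($1\le i\le n-1$), $b_iv_j=v_jb_i$ ($j>i$ or $j<i-1$), $b_i\sigma_j=\sigma_jb_i$ ($j>i$ or $j<i-1$). *)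

(* Defs.v *)
(* Groups given by presentations are encoded as
   words over a generator type modulo the congruence generated by the relators
   and free cancellation. *)
From mathcomp Require Import all_boot.
Unset Printing Implicit Defensive.

(* A word: a list of letters (generator, exponent sign); true = +1, false = -1. *)
Definition word (X : Type) := seq (X * bool).

Definition winv {X : Type} (w : word X) : word X :=
  rev [seq (p.1, ~~ p.2) | p <- w].

(* Congruence on words generated by relation R: this is the presented group
   < X | R >, its elements being the classes of words. *)
Inductive weq {X : Type} (R : word X -> word X -> Prop) : word X -> word X -> Prop :=
| weq_refl w : weq R w w
| weq_sym u v : weq R u v -> weq R v u
| weq_trans u v w : weq R u v -> weq R v w -> weq R u w
| weq_rel u v : R u v -> weq R u v
| weq_cancel (x : X) (b : bool) : weq R [:: (x, b); (x, ~~ b)] [::]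
| weq_cat u u' v v' : weq R u u' -> weq R v v' -> weq R (u ++ v) (u' ++ v').

Definition wsubst {X Y : Type} (f : X -> word Y) (w : word X) : word Y :=
  flatten [seq (if p.2 then f p.1 else winv (f p.1)) | p <- w].

(* Indices are 0-based: TS k = sigma_(k+1) (k < n-1), TV k = v_(k+1) (k < n-1),
   TB k = b_(k+1) (k < n). *)
Inductive tbgen (n : nat) : Type :=
| TS of 'I_n.-1
| TV of 'I_n.-1
| TB of 'I_n.
Arguments TS {n}. Arguments TV {n}. Arguments TB {n}.

(* one-letter words, by 0-based nat index; empty word if out of range
   (never used out of range below) *)
Definition tS n (k : nat) : word (tbgen n) :=
  if @insub _ (fun k => k < n.-1) 'I_n.-1 k is Some i then [:: (TS i, true)] else [::].
Definition tV n (k : nat) : word (tbgen n) :=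
  if @insub _ (fun k => k < n.-1) 'I_n.-1 k is Some i then [:: (TV i, true)] else [::].
Definition tB n (k : nat) : word (tbgen n) :=
  if @insub _ (fun k => k < n) 'I_n k is Some i then [:: (TB i, true)] else [::].

Definition far (i j : nat) : Prop := (i + 2 <= j) \/ (j + 2 <= i).

Definition TBrel (n : nat) (u v : word (tbgen n)) : Prop :=
  (exists i, i.+1 < n.-1 /\ u = tS n i ++ tS n i.+1 ++ tS n i
                           /\ v = tS n i.+1 ++ tS n i ++ tS n i.+1) \/
  (exists i j, i < n.-1 /\ j < n.-1 /\ far i j /\ u = tS n i ++ tS n j /\ v = tS n j ++ tS n i) \/
  (exists i, i < n.-1 /\ u = tV n i ++ tV n i /\ v = [::]) \/
  (exists i j, i < n.-1 /\ j < n.-1 /\ far i j /\ u = tV n i ++ tV n j /\ v = tV n j ++ tV n i) \/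
  (exists i, i.+1 < n.-1 /\ u = tV n i ++ tV n i.+1 ++ tV n i
                           /\ v = tV n i.+1 ++ tV n i ++ tV n i.+1) \/
  (exists i, i < n /\ u = tB n i ++ tB n i /\ v = [::]) \/
  (exists i j, i < n /\ j < n /\ i != j /\ u = tB n i ++ tB n j /\ v = tB n j ++ tB n i) \/
  (exists i j, i < n.-1 /\ j < n.-1 /\ far i j /\ u = tS n i ++ tV n j /\ v = tV n j ++ tS n i) \/
  (exists i, i.+1 < n.-1 /\ u = tV n i ++ tS n i.+1 ++ tV n i
                           /\ v = tV n i.+1 ++ tS n i ++ tV n i.+1) \/
  (exists i, i < n.-1 /\ u = tB n i ++ tV n i /\ v = tV n i ++ tB n i.+1) \/
  (exists i, i < n.-1 /\ u = tB n i ++ tB n i.+1 ++ tS n i ++ tB n i.+1 ++ tB n i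
                       /\ v = tV n i ++ tS n i ++ tV n i) \/
  (exists i j, i < n /\ j < n.-1 /\ (i < j \/ j.+1 < i)
               /\ u = tB n i ++ tV n j /\ v = tV n j ++ tB n i) \/
  (exists i j, i < n /\ j < n.-1 /\ (i < j \/ j.+1 < i)
               /\ u = tB n i ++ tS n j /\ v = tS n j ++ tB n i).

Definition TBeq (n : nat) := weq (TBrel n).

(* GS = sigma_1, GB = b_1, GV k = v_(k+1) (k < n-1, 0-based). *)
Inductive ggen (n : nat) : Type :=
| GS
| GB
| GV of 'I_n.-1.
Arguments GV {n}.

Definition gS n : word (ggen n) := [:: (GS n, true)].
Definition gB n : word (ggen n) := [:: (GB n, true)].
Definition gV n (k : nat) : word (ggen n) :=
  if @insub _ (fun k => k < n.-1) 'I_n.-1 k is Some i then [:: (GV i, true)] else [::].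

Definition Grel (n : nat) (u v : word (ggen n)) : Prop :=
  let V := gV n in let S := gS n in let B := gB n in
  (exists i, i.+1 < n.-1 /\ u = V i ++ V i.+1 ++ V i /\ v = V i.+1 ++ V i ++ V i.+1) \/
  (exists i j, i < n.-1 /\ j < n.-1 /\ far i j /\ u = V i ++ V j /\ v = V j ++ V i) \/
  (exists i, i < n.-1 /\ u = V i ++ V i /\ v = [::]) \/
  (exists j, 2 <= j /\ j < n.-1 /\ u = S ++ V j /\ v = V j ++ S) \/
  (u = B ++ B /\ v = [::]) \/
  (exists j, 1 <= j /\ j < n.-1 /\ u = B ++ V j /\ v = V j ++ B) \/
  (let a := V 0 ++ S ++ V 0 in let c := V 1 ++ S ++ V 1 in
   u = a ++ c ++ a /\ v = c ++ a ++ c) \/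
  (let t := V 1 ++ V 2 ++ V 0 ++ V 1 ++ S ++ V 1 ++ V 0 ++ V 2 ++ V 1 in
   u = S ++ t /\ v = t ++ S) \/
  (let t := V 0 ++ B ++ V 0 in u = B ++ t /\ v = t ++ B) \/
  (let t := V 1 ++ V 0 ++ B ++ V 0 ++ V 1 in u = S ++ t /\ v = t ++ S) \/
  (let t := V 0 ++ B ++ V 0 in u = t ++ B ++ S ++ B ++ t /\ v = V 0 ++ S ++ V 0).

Definition Geq (n : nat) := weq (Grel n).

Definition phi_gen (n : nat) (x : ggen n) : word (tbgen n) :=
  match x with
  | GS => tS n 0
  | GB => tB n 0
  | GV i => tV n i
  end.

(* 1-based products of v's in G:
   gVdown a b = v_a v_(a-1) ... v_b ,  gVup b a = v_b v_(b+1) ... v_a *)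
Definition gVdown n (a b : nat) : word (ggen n) :=
  flatten [seq gV n j.-1 | j <- rev (iota b (a.+1 - b))].
Definition gVup n (b a : nat) : word (ggen n) :=
  flatten [seq gV n j.-1 | j <- iota b (a.+1 - b)].

(* For k = i (0-based index of sigma_(i+1), b_(i+1)):
   sigma_(i+1) |-> (v_i...v_1)(v_(i+1)...v_2) sigma_1 (v_2...v_(i+1))(v_1...v_i), i >= 1,
   sigma_1 |-> sigma_1,
   b_(i+1) |-> (v_i...v_1) b_1 (v_1...v_i)  (i = 0 gives b_1). *)
Definition psi_gen (n : nat) (x : tbgen n) : word (ggen n) :=
  match x with
  | TS k => if val k == 0 then gS n
            else gVdown n k 1 ++ gVdown n k.+1 2 ++ gS n ++ gVup n 2 k.+1 ++ gVup n 1 k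
  | TV k => gV n k
  | TB k => gVdown n k 1 ++ gB n ++ gVup n 1 k
  end.

(* Main.v *)
Require Import Defs.
From mathcomp Require Import all_boot.
From mathcomp Require Import zify.
From Stdlib Require Import Lia.
From Stdlib Require Import ClassicalEpsilon FunctionalExtensionality PropExtensionality ProofIrrelevance.
Unset Printing Implicit Defensive.
Set Implicit Arguments. Unset Strict Implicit.

Section Words.
Variable X : Type.
Implicit Types u v w : word X.

Lemma winv_cat u v : winv (u ++ v) = winv v ++ winv u.
Proof. by rewrite /winv map_cat rev_cat. Qed.

Lemma winv_cons p u : winv (p :: u) = winv u ++ [:: (p.1, ~~ p.2)].
Proof. by rewrite -cat1s winv_cat. Qed.

Lemma winvK u : winv (winv u) = u.
Proof.
elim: u => // -[x b] u IH.
by rewrite winv_cons winv_cat IH /= negbK.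
Qed.

Variable R : word X -> word X -> Prop.

Lemma weq_catl u v w : weq R v w -> weq R (u ++ v) (u ++ w).
Proof. by move=> h; apply: weq_cat => //; apply: weq_refl. Qed.
Lemma weq_catr u v w : weq R v w -> weq R (v ++ u) (w ++ u).
Proof. by move=> h; apply: weq_cat => //; apply: weq_refl. Qed.

Lemma weq_rinv u : weq R (u ++ winv u) [::].
Proof.
elim: u => [|[x b] u IH]; first exact: weq_refl.
rewrite winv_cons /= catA -cat1s -catA.
apply: weq_trans (weq_cancel R x b).
have -> : [:: (x, b); (x, ~~ b)] = [:: (x, b)] ++ [::] ++ [:: (x, ~~ b)] by [].
apply: weq_catl; rewrite catA; apply: weq_catr; exact: IH.
Qed.

Lemma weq_linv u : weq R (winv u ++ u) [::].
Proof. by have := weq_rinv (winv u); rewrite winvK. Qed.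

Lemma weq_winv u v : weq R u v -> weq R (winv u) (winv v).
Proof.
move=> h.
apply: (@weq_trans _ _ _ (winv u ++ (v ++ winv v))).
  rewrite -[X in weq _ X _]cats0; apply: weq_catl; apply: weq_sym; exact: weq_rinv.
apply: (@weq_trans _ _ _ ((winv u ++ u) ++ winv v)).
  rewrite -catA; apply: weq_catl; apply: weq_catr; exact: weq_sym.
rewrite -[X in weq _ _ X]cat0s; apply: weq_catr; exact: weq_linv.
Qed.

End Words.

Section Subst.
Variables X Y : Type.
Implicit Types (f : X -> word Y).

Lemma wsubst_cat f u v : wsubst f (u ++ v) = wsubst f u ++ wsubst f v.
Proof. by rewrite /wsubst map_cat flatten_cat. Qed.

Lemma wsubst_cons f x b u :
  wsubst f ((x, b) :: u) = (if b then f x else winv (f x)) ++ wsubst f u.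
Proof. by []. Qed.

Lemma wsubst1 f x : wsubst f [:: (x, true)] = f x.
Proof. by rewrite /wsubst /= cats0. Qed.

Lemma wsubst_winv f u : wsubst f (winv u) = winv (wsubst f u).
Proof.
elim: u => // -[x b] u IH.
rewrite winv_cons wsubst_cat IH wsubst_cons winv_cat /wsubst /= cats0.
by case: b => //=; rewrite winvK.
Qed.

Lemma wsubst_flatten (T : Type) f (g : T -> word X) l :
  wsubst f (flatten (map g l)) = flatten (map (fun j => wsubst f (g j)) l).
Proof. by elim: l => //= a l IH; rewrite wsubst_cat IH. Qed.

Variables (R1 : word X -> word X -> Prop) (R2 : word Y -> word Y -> Prop).

Lemma wsubst_weq f :
  (forall u v, R1 u v -> weq R2 (wsubst f u) (wsubst f v)) ->
  forall u v, weq R1 u v -> weq R2 (wsubst f u) (wsubst f v).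
Proof.
move=> hR u v; elim=> {u v}.
- move=> w; exact: weq_refl.
- by move=> u v _ h; apply: weq_sym.
- by move=> u v w _ h1 _ h2; apply: weq_trans h2.
- by move=> u v h; apply: hR.
- move=> x b; rewrite /wsubst /= cats0.
  case: b => /=; first exact: weq_rinv.
  exact: weq_linv.
- by move=> u u' v v' _ h1 _ h2; rewrite !wsubst_cat; apply: weq_cat.
Qed.

End Subst.
Section Subst2.
Variables (X Y : Type) (R1 : word X -> word X -> Prop).
Lemma wsubst_inv_weq (f : X -> word Y) (g : Y -> word X) :
  (forall x, weq R1 (wsubst g (f x)) [:: (x, true)]) ->
  forall w, weq R1 (wsubst g (wsubst f w)) w.
Proof.
move=> h; elim=> [|[x b] w IH]; first exact: weq_refl.
rewrite wsubst_cons wsubst_cat -cat1s.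
apply: weq_cat => //.
case: b; first exact: h.
rewrite wsubst_winv.
have -> : [:: (x, false)] = winv [:: (x, true)] by [].
exact: weq_winv.
Qed.

End Subst2.
Section Quot.
Variables (X : Type) (R : word X -> word X -> Prop).

Record Q := mkQ { qp : word X -> Prop; qpf : exists w, qp = weq R w }.

Definition cl (w : word X) : Q := @mkQ (weq R w) (ex_intro _ w erefl).

Lemma Q_ext (p q : Q) : qp p = qp q -> p = q.
Proof.
case: p => p hp; case: q => q hq /= e; subst q.
by rewrite (proof_irrelevance _ hp hq).
Qed.

Lemma cl_eqP u v : cl u = cl v <-> weq R u v.
Proof.
split.
  move=> e; have : qp (cl v) u by rewrite -e; exact: weq_refl.
  by move=> /= h; apply: weq_sym.
move=> h; apply: Q_ext => /=.
apply: functional_extensionality => w; apply: propositional_extensionality.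
split=> h2.
  by apply: weq_trans h2; apply: weq_sym.
exact: weq_trans h2.
Qed.

Definition rep (p : Q) : word X :=
  proj1_sig (constructive_indefinite_description _ (qpf p)).

Lemma repK p : cl (rep p) = p.
Proof.
apply: Q_ext; rewrite /rep; case: constructive_indefinite_description => w /= ->.
by [].
Qed.

Lemma weq_rep w : weq R (rep (cl w)) w.
Proof. by apply/cl_eqP; rewrite repK. Qed.

Definition qmul (p q : Q) : Q := cl (rep p ++ rep q).
Definition q1 : Q := cl [::].

Lemma cl_cat u v : cl (u ++ v) = qmul (cl u) (cl v).
Proof. by apply/cl_eqP; apply: weq_cat; apply: weq_sym; apply: weq_rep. Qed.

Lemma qmulA p q r : qmul p (qmul q r) = qmul (qmul p q) r.
Proof. by rewrite -[p]repK -[q]repK -[r]repK -!cl_cat catA. Qed.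

Lemma qmul1 p : qmul q1 p = p.
Proof. by rewrite -[p]repK /q1 -cl_cat. Qed.

Lemma qmulr1 p : qmul p q1 = p.
Proof. by rewrite -[p]repK /q1 -cl_cat cats0. Qed.

Lemma cl_rel u v : R u v -> cl u = cl v.
Proof. by move=> h; apply/cl_eqP; apply: weq_rel. Qed.

End Quot.
Arguments cl {X R}.
Arguments qmul {X R}.
Arguments q1 {X R}.
Arguments qmulA {X R}. Arguments qmul1 {X R}. Arguments qmulr1 {X R}.
Arguments cl_cat {X R}. Arguments cl_eqP {X R}. Arguments cl_rel {X R}.

Declare Scope q_scope.
Delimit Scope q_scope with q.
Infix "*" := qmul : q_scope.

Open Scope q_scope.

Section Alg.
Variables (X : Type) (R : word X -> word X -> Prop).
Local Notation QQ := (@Q X R).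
Implicit Types x y z g : QQ.

Definition com x y := x * y = y * x.

Lemma com_sym x y : com x y -> com y x.
Proof. by []. Qed.

Lemma com_mul x y z : com x y -> com x z -> com x (y * z).
Proof. by rewrite /com => h1 h2; rewrite qmulA h1 -qmulA h2 qmulA. Qed.

Lemma com_mull x y z : com x z -> com y z -> com (x * y) z.
Proof. by move=> h1 h2; apply: com_sym; apply: com_mul. Qed.

Lemma com1 x : com x q1.
Proof. by rewrite /com qmul1 qmulr1. Qed.

Lemma comT x y t : com x y -> x * (y * t) = y * (x * t).
Proof. by move=> h; rewrite !qmulA h. Qed.

Definition cj g g' x := g * (x * g').

Lemma cj_mul g g' x y : g' * g = q1 -> cj g g' (x * y) = cj g g' x * cj g g' y.
Proof.
by move=> h; rewrite /cj -!qmulA (qmulA g' g) h qmul1.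
Qed.

Lemma cj_inj g g' x y : g * g' = q1 -> g' * g = q1 -> cj g g' x = cj g g' y -> x = y.
Proof.
move=> h1 h2 e.
have : g' * (cj g g' x * g) = g' * (cj g g' y * g) by rewrite e.
rewrite /cj -!qmulA h2 !qmulr1 !qmulA h2 !qmul1; exact: id.
Qed.

Lemma com_cj g g' x y : g * g' = q1 -> g' * g = q1 ->
  com (cj g g' x) (cj g g' y) -> com x y.
Proof. by move=> h1 h2; rewrite /com -!cj_mul //; apply: cj_inj. Qed.

Variable V : nat -> QQ.
Hypothesis VV : forall i, V i * V i = q1.
Hypothesis Vfar : forall i j, far i j -> com (V i) (V j).

Lemma VVt i x : V i * (V i * x) = x.
Proof. by rewrite qmulA VV qmul1. Qed.

Definition VD (l : seq nat) : QQ := foldr (fun j x => V j * x) q1 l.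

Lemma VD_cat l1 l2 : VD (l1 ++ l2) = VD l1 * VD l2.
Proof. by elim: l1 => [|j l IH] /=; rewrite ?qmul1 // IH qmulA. Qed.

Lemma VD1 j : VD [:: j] = V j.
Proof. by rewrite /= qmulr1. Qed.

Lemma VD_com x l : (forall j, j \in l -> com x (V j)) -> com x (VD l).
Proof.
elim: l => [|j l IH] h /=; first exact: com1.
apply: com_mul; first by apply: h; rewrite inE eqxx.
by apply: IH => k hk; apply: h; rewrite inE hk orbT.
Qed.

Lemma VD_rev l : VD l * VD (rev l) = q1.
Proof.
elim: l => [|j l IH] /=; first by rewrite qmul1.
by rewrite rev_cons -cats1 VD_cat VD1 -!qmulA [VD l * _]qmulA IH qmul1 VV.
Qed.

Lemma VD_rev' l : VD (rev l) * VD l = q1.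
Proof. by rewrite -{2}(revK l) VD_rev. Qed.

Lemma iotaS1 m k : iota m k.+1 = iota m k ++ [:: m + k].
Proof. by rewrite -addn1 iotaD. Qed.

Lemma mem_iota_far i m k : (forall j, m <= j < m + k -> far i j) ->
  forall j, j \in iota m k -> com (V i) (V j).
Proof. by move=> h j; rewrite mem_iota => hj; apply: Vfar; apply: h. Qed.

Definition FS S k := VD (rev (iota 0 k)) * (VD (rev (iota 1 k)) * (S * (VD (iota 1 k) * VD (iota 0 k)))).
Definition FB B k := VD (rev (iota 0 k)) * (B * VD (iota 0 k)).

Lemma FS0 S : FS S 0 = S.
Proof. by rewrite /FS /= !qmul1 qmulr1. Qed.
Lemma FB0 B : FB B 0 = B.
Proof. by rewrite /FB /= qmul1 qmulr1. Qed.

Lemma FS_rec S k : FS S k.+1 = V k * (V k.+1 * (FS S k * (V k.+1 * V k))).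
Proof.
rewrite /FS !iotaS1 !rev_cat /= !VD_cat !VD1 !add0n add1n -!qmulA.
have c1 : com (V k.+1) (VD (rev (iota 0 k))).
  apply: VD_com => j; rewrite mem_rev; apply: mem_iota_far => i hi; rewrite /far; lia.
have c2 : com (V k.+1) (VD (iota 0 k)).
  apply: VD_com; apply: mem_iota_far => i hi; rewrite /far; lia.
congr (_ * _); rewrite comT //; congr (_ * (_ * _)).
congr (_ * (_ * _)); rewrite !qmulA; congr (_ * _).
by rewrite -!qmulA c2.
Qed.

Lemma FB_rec B k : FB B k.+1 = V k * (FB B k * V k).
Proof.
by rewrite /FB !iotaS1 !rev_cat /= !VD_cat !VD1 !add0n -!qmulA.
Qed.

End Alg.

Lemma tail3 (X : Type) (R : word X -> word X -> Prop) (a b c d e f t : Q R) :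
  a * (b * c) = d * (e * f) -> a * (b * (c * t)) = d * (e * (f * t)).
Proof. by move=> h; rewrite !qmulA -(qmulA a) h !qmulA. Qed.

Lemma tail2 (X : Type) (R : word X -> word X -> Prop) (a b c d t : Q R) :
  a * b = c * d -> a * (b * t) = c * (d * t).
Proof. by move=> h; rewrite !qmulA h. Qed.

Lemma tail1 (X : Type) (R : word X -> word X -> Prop) (a b t : Q R) :
  a * b = q1 -> a * (b * t) = t.
Proof. by move=> h; rewrite qmulA h qmul1. Qed.

Lemma map_pred_iota m k : map predn (iota m.+1 k) = iota m k.
Proof. by elim: k m => //= k IH m; rewrite IH. Qed.

Lemma cl_flat (X : Type) (R : word X -> word X -> Prop) (f : nat -> word X) l :
  @cl X R (flatten [seq f j.-1 | j <- l]) = VD (fun i => cl (f i)) (map predn l).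
Proof. by elim: l => //= j l IH; rewrite cl_cat IH. Qed.

Lemma eq_VD (X : Type) (R : word X -> word X -> Prop) (V V' : nat -> Q R) l :
  V =1 V' -> VD V l = VD V' l.
Proof. by move=> e; elim: l => //= j l ->; rewrite e. Qed.

Section GSec.
Variable n : nat.
Hypothesis hn : 4 <= n.
Local Notation QG := (@Q (ggen n) (Grel n)).
Definition vG i : QG := cl (gV n i).
Definition sG : QG := cl (gS n).
Definition bG : QG := cl (gB n).

Lemma gV_out i : n.-1 <= i -> gV n i = [::].
Proof. by move=> h; rewrite /gV insubF //; apply/negbTE; rewrite -leqNgt. Qed.

Lemma vG_out i : n.-1 <= i -> vG i = q1.
Proof. by move=> h; rewrite /vG gV_out. Qed.

Lemma vG_VV i : vG i * vG i = q1.
Proof.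
case: (ltnP i n.-1) => h; last by rewrite vG_out // qmul1.
rewrite /vG -cl_cat; apply: cl_rel; do 2 right; left; by exists i.
Qed.

Lemma vG_far i j : far i j -> com (vG i) (vG j).
Proof.
move=> f; case: (ltnP i n.-1) => hi; last by rewrite vG_out //; apply: com_sym; apply: com1.
case: (ltnP j n.-1) => hj; last by rewrite (vG_out hj); apply: com1.
rewrite /com /vG -!cl_cat; apply: cl_rel; right; left; by exists i, j.
Qed.

Lemma vG_braid i : i.+1 < n.-1 -> vG i * (vG i.+1 * vG i) = vG i.+1 * (vG i * vG i.+1).
Proof. move=> h; rewrite /vG -!cl_cat; apply: cl_rel; left; by exists i. Qed.

Lemma sV j : 2 <= j -> com sG (vG j).
Proof.
move=> h; case: (ltnP j n.-1) => hj; last by rewrite (vG_out hj); apply: com1.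
rewrite /com /vG /sG -!cl_cat; apply: cl_rel; do 3 right; left; by exists j.
Qed.

Lemma bB : bG * bG = q1.
Proof. rewrite /bG -!cl_cat; apply: cl_rel; do 4 right; left; by []. Qed.

Lemma bV j : 1 <= j -> com bG (vG j).
Proof.
move=> h; case: (ltnP j n.-1) => hj; last by rewrite (vG_out hj); apply: com1.
rewrite /com /vG /bG -!cl_cat; apply: cl_rel; do 5 right; left; by exists j.
Qed.

Lemma G7 : vG 0 * (sG * (vG 0 * (vG 1 * (sG * (vG 1 * (vG 0 * (sG * vG 0))))))) =
           vG 1 * (sG * (vG 1 * (vG 0 * (sG * (vG 0 * (vG 1 * (sG * vG 1))))))).
Proof.
rewrite /vG /sG -!cl_cat; apply: cl_rel; do 6 right; left; cbv zeta.
by split; rewrite -?catA.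
Qed.

Lemma G8 : com sG (vG 1 * (vG 2 * (vG 0 * (vG 1 * (sG * (vG 1 * (vG 0 * (vG 2 * vG 1)))))))).
Proof.
rewrite /com /vG /sG -!cl_cat; apply: cl_rel; do 7 right; left; cbv zeta.
by split; rewrite -?catA.
Qed.

Lemma G9 : com bG (vG 0 * (bG * vG 0)).
Proof.
rewrite /com /vG /bG -!cl_cat; apply: cl_rel; do 8 right; left; cbv zeta.
by split; rewrite -?catA.
Qed.

Lemma G10 : com sG (vG 1 * (vG 0 * (bG * (vG 0 * vG 1)))).
Proof.
rewrite /com /vG /bG /sG -!cl_cat; apply: cl_rel; do 9 right; left; cbv zeta.
by split; rewrite -?catA.
Qed.

Lemma G11 : vG 0 * (bG * (vG 0 * (bG * (sG * (bG * (vG 0 * (bG * vG 0))))))) = vG 0 * (sG * vG 0).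
Proof.
rewrite /vG /bG /sG -!cl_cat; apply: cl_rel; do 10 right; cbv zeta.
by split; rewrite -?catA.
Qed.


Definition s k := locked (FS vG sG k).
Definition b k := locked (FB vG bG k).

Lemma s0 : s 0 = sG. Proof. rewrite /s -lock; exact: FS0. Qed.
Lemma b0 : b 0 = bG. Proof. rewrite /b -lock; exact: FB0. Qed.
Lemma srec k : s k.+1 = vG k * (vG k.+1 * (s k * (vG k.+1 * vG k))).
Proof. rewrite /s -!lock; exact: (FS_rec vG_far). Qed.
Lemma brec k : b k.+1 = vG k * (b k * vG k).
Proof. rewrite /b -!lock; exact: FB_rec. Qed.

Lemma VfarT i j t : far i j -> vG i * (vG j * t) = vG j * (vG i * t).
Proof. by move=> h; apply: comT; apply: vG_far. Qed.
Lemma braidT i t : i.+1 < n.-1 ->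
  vG i * (vG i.+1 * (vG i * t)) = vG i.+1 * (vG i * (vG i.+1 * t)).
Proof. by move=> h; apply: tail3; apply: vG_braid. Qed.
Lemma VVT i t : vG i * (vG i * t) = t.
Proof. by apply: tail1; apply: vG_VV. Qed.

Definition rho := VD vG (iota 0 n.-1).
Definition rho' := VD vG (rev (iota 0 n.-1)).
Definition phi x := cj rho rho' x.

Lemma rr : rho * rho' = q1. Proof. exact: (VD_rev vG_VV). Qed.
Lemma r'r : rho' * rho = q1. Proof. exact: (VD_rev' vG_VV). Qed.
Lemma phi_mul x y : phi (x * y) = phi x * phi y.
Proof. exact: (cj_mul _ _ r'r). Qed.

Lemma rhoV i : i.+1 < n.-1 -> rho * vG i = vG i.+1 * rho.
Proof.
move=> h.
have e2 : iota 0 i.+2 = iota 0 i ++ [:: i; i.+1] by rewrite -addn2 iotaD.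
rewrite /rho -(subnKC h) iotaD e2 -catA !VD_cat /= qmulr1 -!qmulA.
have c1 : com (vG i.+1) (VD vG (iota 0 i)).
  apply: VD_com; apply: mem_iota_far => //; first exact: vG_far.
  by move=> j hj; rewrite /far; lia.
have c2 : com (vG i) (VD vG (iota (0 + i.+2) (n.-1 - i.+2))).
  apply: VD_com; apply: mem_iota_far => //; first exact: vG_far.
  by move=> j hj; rewrite /far; lia.
rewrite (comT _ c1); congr (_ * _).
by rewrite -c2 braidT.
Qed.

Lemma phiV i : i.+1 < n.-1 -> phi (vG i) = vG i.+1.
Proof. by move=> h; rewrite /phi /cj qmulA rhoV // -qmulA rr qmulr1. Qed.

Lemma phiS : phi sG = s 1.
Proof.
have h2 : 2 <= n.-1 by lia.
rewrite srec s0 /phi /cj /rho' /rho -(subnKC h2) iotaD rev_cat !VD_cat /= !qmulr1 -!qmulA.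
congr (_ * (_ * _)).
have c : com sG (VD vG (iota (0 + 2) (n.-1 - 2))).
  apply: VD_com => j; rewrite mem_iota => hj; apply: sV; lia.
by rewrite -(comT _ c); congr (_ * _); apply: tail1; apply: (VD_rev vG_VV).
Qed.

Lemma phiB : phi bG = b 1.
Proof.
have h2 : 1 <= n.-1 by lia.
rewrite brec b0 /phi /cj /rho' /rho -(subnKC h2) iotaD rev_cat !VD_cat /= !qmulr1 -!qmulA.
congr (_ * _).
have c : com bG (VD vG (iota (0 + 1) (n.-1 - 1))).
  apply: VD_com => j; rewrite mem_iota => hj; apply: bV; lia.
by rewrite -(comT _ c); congr (_ * _); apply: tail1; apply: (VD_rev vG_VV).
Qed.

Lemma phi_s k : k.+1 < n.-1 -> phi (s k) = s k.+1.
Proof.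
elim: k => [|k IH] h; first by rewrite s0 phiS.
rewrite srec !phi_mul IH; last lia.
by rewrite !phiV ?[RHS]srec //; lia.
Qed.

Lemma phi_b k : k.+1 < n -> phi (b k) = b k.+1.
Proof.
elim: k => [|k IH] h; first by rewrite b0 phiB.
rewrite brec !phi_mul IH; last lia.
by rewrite !phiV ?[RHS]brec //; lia.
Qed.

Lemma phiI_mul k x y : iter k phi (x * y) = iter k phi x * iter k phi y.
Proof. by elim: k => //= k ->; rewrite phi_mul. Qed.

Lemma phiI_V j k : j + k < n.-1 -> iter k phi (vG j) = vG (j + k).
Proof.
elim: k => [|k IH] h /=; first by rewrite addn0.
by rewrite IH ?phiV ?addnS //; lia.
Qed.

Lemma phiI_s j k : j + k < n.-1 -> iter k phi (s j) = s (j + k).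
Proof.
elim: k => [|k IH] h /=; first by rewrite addn0.
by rewrite IH ?phi_s ?addnS //; lia.
Qed.

Lemma phiI_b j k : j + k < n -> iter k phi (b j) = b (j + k).
Proof.
elim: k => [|k IH] h /=; first by rewrite addn0.
by rewrite IH ?phi_b ?addnS //; lia.
Qed.


Lemma sVT j t : 2 <= j -> sG * (vG j * t) = vG j * (sG * t).
Proof. by move=> h; apply: comT; apply: sV. Qed.
Lemma bVT j t : 1 <= j -> bG * (vG j * t) = vG j * (bG * t).
Proof. by move=> h; apply: comT; apply: bV. Qed.

Lemma s1E : s 1 = vG 0 * (vG 1 * (sG * (vG 1 * vG 0))).
Proof. by rewrite srec s0. Qed.
Lemma s2E : s 2 = vG 1 * (vG 2 * (vG 0 * (vG 1 * (sG * (vG 1 * (vG 0 * (vG 2 * vG 1))))))).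
Proof. by rewrite srec s1E -!qmulA. Qed.
Lemma b1E : b 1 = vG 0 * (bG * vG 0).
Proof. by rewrite brec b0. Qed.
Lemma b2E : b 2 = vG 1 * (vG 0 * (bG * (vG 0 * vG 1))).
Proof. by rewrite brec b1E -!qmulA. Qed.

Lemma cjV0 : forall x y, cj (vG 0) (vG 0) (x * y) = cj (vG 0) (vG 0) x * cj (vG 0) (vG 0) y.
Proof. by move=> x y; apply: cj_mul; apply: vG_VV. Qed.

Lemma Bas1 : s 0 * (s 1 * s 0) = s 1 * (s 0 * s 1).
Proof.
apply: (@cj_inj _ _ (vG 0) (vG 0)); try exact: vG_VV.
rewrite !cjV0 s0 s1E /cj -!qmulA !VVT vG_VV qmulr1; exact: G7.
Qed.

Lemma Bas2 m : com sG (s (m + 2)).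
Proof.
elim: m => [|m IH]; first by rewrite add0n s2E; exact: G8.
rewrite addSn srec; apply: com_mul; first by apply: sV; lia.
apply: com_mul; first by apply: sV; lia.
apply: com_mul => //; apply: com_mul; apply: sV; lia.
Qed.

Lemma Bas4 m : com (vG 0) (s (m + 2)).
Proof.
elim: m => [|m IH].
  rewrite add0n s2E /com -!qmulA.
  have f20 : far 2 0 by rewrite /far; lia.
  have f02 : far 0 2 by rewrite /far; lia.
  have b0 : 0 < n.-2 by lia.
  have b1 : 1 < n.-2 by lia.
  rewrite [in LHS](VfarT _ f20) [in LHS]braidT; last lia.
  rewrite [in LHS]braidT; last lia.
  rewrite [in LHS](VfarT _ f02) -[in LHS](@sVT 2) //.
  do 5 congr (_ * _).
  rewrite (VfarT _ f02) -(@braidT 1); last lia.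
  by rewrite -(@vG_braid 0) ?(VfarT _ f20) //; lia.
rewrite addSn srec; apply: com_mul; first by apply: vG_far; rewrite /far; lia.
apply: com_mul; first by apply: vG_far; rewrite /far; lia.
apply: com_mul => //; apply: com_mul; apply: vG_far; rewrite /far; lia.
Qed.

Lemma Bas5 m : com bG (b (m + 1)).
Proof.
elim: m => [|m IH]; first by rewrite add0n b1E; exact: G9.
rewrite addSn brec; apply: com_mul; first by apply: bV; lia.
by apply: com_mul => //; apply: bV; lia.
Qed.

Lemma Bas7 m : com (vG 0) (b (m + 2)).
Proof.
elim: m => [|m IH].
  rewrite add0n b2E /com -!qmulA.
  rewrite [in LHS](@braidT 0); last lia.
  rewrite -[in LHS](@bVT 1) //.
  by rewrite -(@vG_braid 0) //; lia.
rewrite addSn brec; apply: com_mul; first by apply: vG_far; rewrite /far; lia.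
by apply: com_mul => //; apply: vG_far; rewrite /far; lia.
Qed.

Lemma Bas8 m : com bG (s (m + 1)).
Proof.
elim: m => [|m IH].
  rewrite add0n s1E.
  apply: (@com_cj _ _ (vG 1 * vG 0) (vG 0 * vG 1)).
  - by rewrite -!qmulA VVT vG_VV.
  - by rewrite -!qmulA VVT vG_VV.
  rewrite /cj -!qmulA !VVT vG_VV qmulr1.
  by apply: com_sym; apply: G10.
rewrite addSn srec; apply: com_mul; first by apply: bV; lia.
apply: com_mul; first by apply: bV; lia.
by apply: com_mul => //; apply: com_mul; apply: bV; lia.
Qed.

Lemma Bas9 m : com sG (b (m + 2)).
Proof.
elim: m => [|m IH]; first by rewrite add0n b2E; exact: G10.
rewrite addSn brec; apply: com_mul; first by apply: sV; lia.
by apply: com_mul => //; apply: sV; lia.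
Qed.

Lemma Bas10 : b 0 * (b 1 * (s 0 * (b 1 * b 0))) = vG 0 * (s 0 * vG 0).
Proof.
have c := Bas5 0; rewrite add0n in c.
rewrite b0 s0 (comT _ c) -c b1E -!qmulA; exact: G11.
Qed.

Lemma phi1 : phi q1 = q1.
Proof. by rewrite /phi /cj qmul1 rr. Qed.

Lemma phiI1 k : iter k phi q1 = q1.
Proof. by elim: k => //= k ->; rewrite phi1. Qed.

Lemma com_shift x y k x0 y0 : iter k phi x0 = x -> iter k phi y0 = y -> com x0 y0 -> com x y.
Proof. by move=> <- <-; rewrite /com -!phiI_mul => ->. Qed.

Lemma T1 i : i.+1 < n.-1 -> s i * (s i.+1 * s i) = s i.+1 * (s i * s i.+1).
Proof.
move=> h.
have e0 : s i = iter i phi (s 0) by rewrite phiI_s ?add0n //; lia.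
have e1 : s i.+1 = iter i phi (s 1) by rewrite phiI_s ?add1n //.
by rewrite e0 e1 -!phiI_mul Bas1.
Qed.

Lemma T2 i j : i < n.-1 -> j < n.-1 -> far i j -> com (s i) (s j).
Proof.
have key : forall i j, j < n.-1 -> i + 2 <= j -> com (s i) (s j).
  move=> {}i {}j hj hij.
  apply: (@com_shift _ _ i (s 0) (s (j - i))).
  - by rewrite phiI_s ?add0n //; lia.
  - by rewrite phiI_s ?subnK //; lia.
  rewrite s0; have := Bas2 (j - i - 2); rewrite subnK //; lia.
move=> hi hj [f|f]; first exact: key.
by apply: com_sym; apply: key.
Qed.

Lemma T5 i j : i < n.-1 -> j < n.-1 -> far i j -> com (s i) (vG j).
Proof.
move=> hi hj [f|f].
  apply: (@com_shift _ _ i (s 0) (vG (j - i))).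
  - by rewrite phiI_s ?add0n //; lia.
  - by rewrite phiI_V ?subnK //; lia.
  by rewrite s0; apply: sV; lia.
apply: (@com_shift _ _ j (s (i - j)) (vG 0)).
- by rewrite phiI_s ?subnK //; lia.
- by rewrite phiI_V ?add0n //; lia.
have := Bas4 (i - j - 2); rewrite subnK; last lia.
by move=> h; apply: com_sym.
Qed.

Lemma T6 i : i < n -> b i * b i = q1.
Proof.
move=> h.
have e0 : b i = iter i phi (b 0) by rewrite phiI_b ?add0n //; lia.
by rewrite e0 -phiI_mul b0 bB phiI1.
Qed.

Lemma T7 i j : i < n -> j < n -> i != j -> com (b i) (b j).
Proof.
have key : forall i j, j < n -> i < j -> com (b i) (b j).
  move=> {}i {}j hj hij.
  apply: (@com_shift _ _ i (b 0) (b (j - i))).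
  - by rewrite phiI_b ?add0n //; lia.
  - by rewrite phiI_b ?subnK //; lia.
  rewrite b0; have := Bas5 (j - i - 1); rewrite subnK //; lia.
move=> hi hj; rewrite neq_ltn => /orP [f|f]; first exact: key.
by apply: com_sym; apply: key.
Qed.

Lemma T9 i : vG i * (s i.+1 * vG i) = vG i.+1 * (s i * vG i.+1).
Proof. by rewrite srec -!qmulA VVT vG_VV qmulr1. Qed.

Lemma T10 i : b i * vG i = vG i * b i.+1.
Proof. by rewrite brec VVT. Qed.

Lemma T11 i : i < n.-1 ->
  b i * (b i.+1 * (s i * (b i.+1 * b i))) = vG i * (s i * vG i).
Proof.
move=> h.
have e0 : b i = iter i phi (b 0) by rewrite phiI_b ?add0n //; lia.
have e1 : b i.+1 = iter i phi (b 1) by rewrite phiI_b ?add1n //; lia.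
have e2 : s i = iter i phi (s 0) by rewrite phiI_s ?add0n //; lia.
have e3 : vG i = iter i phi (vG 0) by rewrite phiI_V ?add0n //; lia.
by rewrite e0 e1 e2 e3 -!phiI_mul Bas10.
Qed.

Lemma T12 i j : i < n -> j < n.-1 -> (i < j \/ j.+1 < i) -> com (b i) (vG j).
Proof.
move=> hi hj [f|f].
  apply: (@com_shift _ _ i (b 0) (vG (j - i))).
  - by rewrite phiI_b ?add0n //; lia.
  - by rewrite phiI_V ?subnK //; lia.
  by rewrite b0; apply: bV; lia.
apply: (@com_shift _ _ j (b (i - j)) (vG 0)).
- by rewrite phiI_b ?subnK //; lia.
- by rewrite phiI_V ?add0n //; lia.
have := Bas7 (i - j - 2); rewrite subnK; last lia.
by move=> h; apply: com_sym.
Qed.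

Lemma T13 i j : i < n -> j < n.-1 -> (i < j \/ j.+1 < i) -> com (b i) (s j).
Proof.
move=> hi hj [f|f].
  apply: (@com_shift _ _ i (b 0) (s (j - i))).
  - by rewrite phiI_b ?add0n //; lia.
  - by rewrite phiI_s ?subnK //; lia.
  rewrite b0; have := Bas8 (j - i - 1); rewrite subnK //; lia.
apply: (@com_shift _ _ j (b (i - j)) (s 0)).
- by rewrite phiI_b ?subnK //; lia.
- by rewrite phiI_s ?add0n //; lia.
have := Bas9 (i - j - 2); rewrite subnK; last lia.
by rewrite s0 => h; apply: com_sym.
Qed.

End GSec.

Section Part2.
Variable n : nat.
Hypothesis hn : 4 <= n.
Local Notation psi := (@psi_gen n).

Lemma psiV i : cl (wsubst psi (tV n i)) = vG n i.
Proof.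
rewrite /tV /vG; case: (ltnP i n.-1) => h.
  by rewrite insubT wsubst1.
by rewrite insubF ?gV_out //; apply/negbTE; rewrite -leqNgt.
Qed.

Lemma cl_VD k m : @cl _ (Grel n) (flatten [seq gV n j.-1 | j <- iota m.+1 k]) = VD (vG n) (iota m k).
Proof. by rewrite cl_flat map_pred_iota. Qed.
Lemma cl_VDr k m : @cl _ (Grel n) (flatten [seq gV n j.-1 | j <- rev (iota m.+1 k)]) = VD (vG n) (rev (iota m k)).
Proof. by rewrite cl_flat map_rev map_pred_iota. Qed.

Lemma psiS i : i < n.-1 -> cl (wsubst psi (tS n i)) = s n i.
Proof.
case: i => [|k] h; first by rewrite /tS insubT wsubst1 s0.
rewrite /tS insubT wsubst1.
have -> : psi (TS (Sub k.+1 h)) = gVdown n k.+1 1 ++ gVdown n k.+2 2 ++ gS n ++ gVup n 2 k.+2 ++ gVup n 1 k.+1 by [].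
rewrite /gVdown /gVup !subSS !subn0 !cl_cat !cl_VD !cl_VDr.
by rewrite /s -lock.
Qed.

Lemma psiB i : i < n -> cl (wsubst psi (tB n i)) = b n i.
Proof.
move=> h; rewrite /tB insubT wsubst1.
have -> : psi (TB (Sub i h)) = gVdown n i 1 ++ gB n ++ gVup n 1 i by [].
rewrite /gVdown /gVup !subSS !subn0 !cl_cat !cl_VD !cl_VDr.
by rewrite /b -lock.
Qed.

Lemma part2 u v : TBeq n u v -> Geq n (wsubst psi u) (wsubst psi v).
Proof.
apply: wsubst_weq => {}u {}v H; apply/cl_eqP.
have hn1 : 2 < n.-1 by lia.
case: H => [[i [hi [-> ->]]]|H].
  have hi' : i < n.-1 by lia.
  rewrite !wsubst_cat !cl_cat (psiS hi') (psiS hi); exact: T1.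
case: H => [[i [j [hi [hj [hf [-> ->]]]]]]|H].
  rewrite !wsubst_cat !cl_cat (psiS hi) (psiS hj); exact: T2.
case: H => [[i [hi [-> ->]]]|H].
  rewrite !wsubst_cat !cl_cat !psiV; exact: vG_VV.
case: H => [[i [j [hi [hj [hf [-> ->]]]]]]|H].
  rewrite !wsubst_cat !cl_cat !psiV; exact: vG_far.
case: H => [[i [hi [-> ->]]]|H].
  rewrite !wsubst_cat !cl_cat !psiV; exact: vG_braid.
case: H => [[i [hi [-> ->]]]|H].
  rewrite !wsubst_cat !cl_cat (psiB hi); exact: T6.
case: H => [[i [j [hi [hj [hf [-> ->]]]]]]|H].
  rewrite !wsubst_cat !cl_cat (psiB hi) (psiB hj); exact: T7.
case: H => [[i [j [hi [hj [hf [-> ->]]]]]]|H].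
  rewrite !wsubst_cat !cl_cat (psiS hi) !psiV; exact: T5.
case: H => [[i [hi [-> ->]]]|H].
  have hi' : i < n.-1 by lia.
  rewrite !wsubst_cat !cl_cat (psiS hi') (psiS hi) !psiV; exact: T9.
case: H => [[i [hi [-> ->]]]|H].
  have hi' : i < n by lia.
  have hi'' : i.+1 < n by lia.
  rewrite !wsubst_cat !cl_cat (psiB hi') (psiB hi'') !psiV; exact: T10.
case: H => [[i [hi [-> ->]]]|H].
  have hi' : i < n by lia.
  have hi'' : i.+1 < n by lia.
  rewrite !wsubst_cat !cl_cat (psiB hi') (psiB hi'') (psiS hi) !psiV; exact: T11.
case: H => [[i [j [hi [hj [hf [-> ->]]]]]]|H].
  rewrite !wsubst_cat !cl_cat (psiB hi) !psiV; exact: T12.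
case: H => [i [j [hi [hj [hf [-> ->]]]]]].
rewrite !wsubst_cat !cl_cat (psiB hi) (psiS hj); exact: T13.
Qed.

Lemma part3 w : Geq n (wsubst psi (wsubst (@phi_gen n) w)) w.
Proof.
have h0 : 0 < n.-1 by lia.
apply: wsubst_inv_weq => -[||i]; apply/cl_eqP.
- by rewrite /= (psiS h0) s0.
- have h0' : 0 < n by lia.
  by rewrite /= (psiB h0') b0.
- by rewrite /= psiV /vG /gV valK.
Qed.

End Part2.

Section TBSec.
Variable n : nat.
Hypothesis hn : 4 <= n.
Local Notation QT := (@Q (tbgen n) (TBrel n)).
Local Notation phi := (@phi_gen n).
Local Notation psi := (@psi_gen n).
Definition vT i : QT := cl (tV n i).
Definition sT i : QT := cl (tS n i).
Definition bT i : QT := cl (tB n i).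

Lemma tV_out i : n.-1 <= i -> tV n i = [::].
Proof. by move=> h; rewrite /tV insubF //; apply/negbTE; rewrite -leqNgt. Qed.
Lemma vT_out i : n.-1 <= i -> vT i = q1.
Proof. by move=> h; rewrite /vT tV_out. Qed.

Tactic Notation "trel" integer(k) := rewrite -!cl_cat; apply: cl_rel; do k right.

Lemma vT_VV i : vT i * vT i = q1.
Proof.
case: (ltnP i n.-1) => h; last by rewrite vT_out // qmul1.
rewrite /vT; trel 2; left; by exists i.
Qed.

Lemma vT_far i j : far i j -> com (vT i) (vT j).
Proof.
move=> f; case: (ltnP i n.-1) => hi; last by rewrite vT_out //; apply: com_sym; apply: com1.
case: (ltnP j n.-1) => hj; last by rewrite (vT_out hj); apply: com1.
rewrite /com /vT; trel 3; left; by exists i, j.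
Qed.

Lemma vT_braid i : i.+1 < n.-1 -> vT i * (vT i.+1 * vT i) = vT i.+1 * (vT i * vT i.+1).
Proof. move=> h; rewrite /vT; trel 4; left; by exists i. Qed.

Lemma sT_far i j : i < n.-1 -> j < n.-1 -> far i j -> com (sT i) (sT j).
Proof. move=> hi hj f; rewrite /com /sT; trel 1; left; by exists i, j. Qed.

Lemma sT_braid i : i.+1 < n.-1 -> sT i * (sT i.+1 * sT i) = sT i.+1 * (sT i * sT i.+1).
Proof. move=> h; rewrite /sT; trel 0; left; by exists i. Qed.

Lemma BB i : i < n -> bT i * bT i = q1.
Proof. move=> h; rewrite /bT; trel 5; left; by exists i. Qed.

Lemma Bcom i j : i < n -> j < n -> i != j -> com (bT i) (bT j).
Proof. move=> hi hj f; rewrite /com /bT; trel 6; left; by exists i, j. Qed.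

Lemma sTV i j : i < n.-1 -> j < n.-1 -> far i j -> com (sT i) (vT j).
Proof. move=> hi hj f; rewrite /com /sT /vT; trel 7; left; by exists i, j. Qed.

Lemma VSV i : i.+1 < n.-1 -> vT i * (sT i.+1 * vT i) = vT i.+1 * (sT i * vT i.+1).
Proof. move=> h; rewrite /sT /vT; trel 8; left; by exists i. Qed.

Lemma BV i : i < n.-1 -> bT i * vT i = vT i * bT i.+1.
Proof. move=> h; rewrite /bT /vT; trel 9; left; by exists i. Qed.

Lemma BBS i : i < n.-1 -> bT i * (bT i.+1 * (sT i * (bT i.+1 * bT i))) = vT i * (sT i * vT i).
Proof. move=> h; rewrite /bT /vT /sT; trel 10; left; by exists i. Qed.

Lemma BVcom i j : i < n -> j < n.-1 -> (i < j \/ j.+1 < i) -> com (bT i) (vT j).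
Proof. move=> hi hj f; rewrite /com /bT /vT; trel 11; left; by exists i, j. Qed.

Lemma BScom i j : i < n -> j < n.-1 -> (i < j \/ j.+1 < i) -> com (bT i) (sT j).
Proof. move=> hi hj f; rewrite /com /bT /sT; trel 12; by exists i, j. Qed.

Lemma VVT' i t : vT i * (vT i * t) = t.
Proof. by apply: tail1; apply: vT_VV. Qed.

Lemma sT_rec k : k.+1 < n.-1 -> sT k.+1 = vT k * (vT k.+1 * (sT k * (vT k.+1 * vT k))).
Proof.
move=> h.
transitivity (vT k * ((vT k.+1 * (sT k * vT k.+1)) * vT k)); last by rewrite -!qmulA.
by rewrite -VSV // -!qmulA VVT' vT_VV qmulr1.
Qed.

Lemma bT_rec k : k < n.-1 -> bT k.+1 = vT k * (bT k * vT k).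
Proof. by move=> h; rewrite BV // VVT'. Qed.

Lemma FS_T k : k < n.-1 -> FS vT (sT 0) k = sT k.
Proof.
elim: k => [|k IH] h; first exact: FS0.
by rewrite (FS_rec vT_far) IH ?sT_rec //; lia.
Qed.

Lemma FB_T k : k < n -> FB vT (bT 0) k = bT k.
Proof.
elim: k => [|k IH] h; first exact: FB0.
by rewrite FB_rec IH ?bT_rec //; lia.
Qed.

Lemma phiV' i : cl (wsubst phi (gV n i)) = vT i.
Proof.
rewrite /gV /vT; case: (ltnP i n.-1) => h.
  by rewrite insubT wsubst1.
by rewrite insubF ?tV_out //; apply/negbTE; rewrite -leqNgt.
Qed.

Lemma phi_flat l : @cl _ (TBrel n) (wsubst phi (flatten [seq gV n j.-1 | j <- l])) = VD vT (map predn l).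
Proof.
rewrite wsubst_flatten (@cl_flat _ (TBrel n) (fun i => wsubst phi (gV n i))).
by apply: eq_VD => i; apply: phiV'.
Qed.

Lemma phiS0 : cl (wsubst phi (gS n)) = sT 0.
Proof. by rewrite /gS wsubst1. Qed.
Lemma phiB0 : cl (wsubst phi (gB n)) = bT 0.
Proof. by rewrite /gB wsubst1. Qed.

Lemma part4 w : TBeq n (wsubst phi (wsubst psi w)) w.
Proof.
apply: wsubst_inv_weq => -[[k hk]|[k hk]|[k hk]]; apply/cl_eqP.
- have e : tS n k = [:: (TS (Ordinal hk), true)] by rewrite /tS insubT.
  rewrite -e -/(sT k) -(FS_T hk).
  case: k hk e => [|k] hk e.
    have -> : psi (TS (Ordinal hk)) = gS n by [].
    by rewrite phiS0 FS0.
  have -> : psi (TS (Ordinal hk)) = gVdown n k.+1 1 ++ gVdown n k.+2 2 ++ gS n ++ gVup n 2 k.+2 ++ gVup n 1 k.+1 by [].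
  rewrite /gVdown /gVup !subSS !subn0; do 4 rewrite wsubst_cat; do 4 rewrite cl_cat.
  rewrite !phi_flat phiS0 !map_rev !map_pred_iota.
  by rewrite /FS.
- rewrite phiV' /vT /tV.
  by rewrite valK.
- have e : tB n k = [:: (TB (Ordinal hk), true)] by rewrite /tB insubT.
  rewrite -e -/(bT k) -(FB_T hk).
  have -> : psi (TB (Ordinal hk)) = gVdown n k 1 ++ gB n ++ gVup n 1 k by [].
  rewrite /gVdown /gVup !subSS !subn0; do 2 rewrite wsubst_cat; do 2 rewrite cl_cat.
  rewrite !phi_flat phiB0 !map_rev !map_pred_iota.
  by rewrite /FB.
Qed.

Lemma D7 : vT 0 * (sT 0 * (vT 0 * (vT 1 * (sT 0 * (vT 1 * (vT 0 * (sT 0 * vT 0))))))) =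
           vT 1 * (sT 0 * (vT 1 * (vT 0 * (sT 0 * (vT 0 * (vT 1 * (sT 0 * vT 1))))))).
Proof.
have h01 : 0.+1 < n.-1 by lia.
have e := VSV h01.
rewrite -!(tail3 _ e) -e !VVT'.
by rewrite (tail3 _ (sT_braid h01)).
Qed.

Lemma D8 : com (sT 0) (vT 1 * (vT 2 * (vT 0 * (vT 1 * (sT 0 * (vT 1 * (vT 0 * (vT 2 * vT 1)))))))).
Proof.
have h1 : 1.+1 < n.-1 by lia.
have h0 : 0.+1 < n.-1 by lia.
have -> : vT 1 * (vT 2 * (vT 0 * (vT 1 * (sT 0 * (vT 1 * (vT 0 * (vT 2 * vT 1))))))) = sT 2.
  by rewrite (sT_rec h1) (sT_rec h0) -!qmulA.
apply: sT_far; rewrite /far; lia.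
Qed.

Lemma D9 : com (bT 0) (vT 0 * (bT 0 * vT 0)).
Proof.
have h0 : 0 < n.-1 by lia.
rewrite -(bT_rec h0); apply: Bcom => //; lia.
Qed.

Lemma D10 : com (sT 0) (vT 1 * (vT 0 * (bT 0 * (vT 0 * vT 1)))).
Proof.
have h0 : 0 < n.-1 by lia.
have h1 : 1 < n.-1 by lia.
have -> : vT 1 * (vT 0 * (bT 0 * (vT 0 * vT 1))) = bT 2.
  by rewrite (bT_rec h1) (bT_rec h0) -!qmulA.
apply: com_sym; apply: BScom; lia.
Qed.

Lemma D11 : vT 0 * (bT 0 * (vT 0 * (bT 0 * (sT 0 * (bT 0 * (vT 0 * (bT 0 * vT 0))))))) = vT 0 * (sT 0 * vT 0).
Proof.
have h0 : 0 < n.-1 by lia.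
have e1 := bT_rec h0.
have eT : forall t, vT 0 * (bT 0 * (vT 0 * t)) = bT 1 * t by move=> t; rewrite e1 -!qmulA.
have c : com (bT 0) (bT 1) by apply: Bcom => //; lia.
rewrite eT -e1 -(comT _ c) c; exact: BBS.
Qed.

Lemma phiSL : cl (wsubst phi (locked (gS n))) = sT 0.
Proof. by rewrite -lock phiS0. Qed.
Lemma phiBL : cl (wsubst phi (locked (gB n))) = bT 0.
Proof. by rewrite -lock phiB0. Qed.

Lemma part1 u v : Geq n u v -> TBeq n (wsubst phi u) (wsubst phi v).
Proof.
apply: wsubst_weq => {}u {}v H; apply/cl_eqP.
have h0 : 0 < n.-1 by lia.
case: H => [[i [hi [-> ->]]]|H].
  rewrite !wsubst_cat !cl_cat !phiV'; exact: vT_braid.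
case: H => [[i [j [hi [hj [hf [-> ->]]]]]]|H].
  rewrite !wsubst_cat !cl_cat !phiV'; exact: vT_far.
case: H => [[i [hi [-> ->]]]|H].
  rewrite !wsubst_cat !cl_cat !phiV'; exact: vT_VV.
case: H => [[j [h2 [hj [-> ->]]]]|H].
  rewrite [gS n]lock !wsubst_cat !cl_cat !phiV' phiSL; apply: sTV => //; rewrite /far; lia.
case: H => [[-> ->]|H].
  rewrite [gB n]lock !wsubst_cat !cl_cat phiBL; apply: BB; lia.
case: H => [[j [h1 [hj [-> ->]]]]|H].
  rewrite [gB n]lock !wsubst_cat !cl_cat !phiV' phiBL; apply: BVcom => //; lia.
case: H => [H|H].
  move: H; cbv zeta => -[-> ->].
  rewrite [gS n]lock !wsubst_cat !cl_cat !phiV' !phiSL -!qmulA; exact: D7.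
case: H => [H|H].
  move: H; cbv zeta => -[-> ->].
  rewrite [gS n]lock !wsubst_cat !cl_cat !phiV' !phiSL; exact: D8.
case: H => [H|H].
  move: H; cbv zeta => -[-> ->].
  rewrite [gB n]lock !wsubst_cat !cl_cat !phiV' !phiBL; exact: D9.
case: H => [H|H].
  move: H; cbv zeta => -[-> ->].
  rewrite [gS n]lock [gB n]lock !wsubst_cat !cl_cat !phiV' !phiSL !phiBL; exact: D10.
move: H; cbv zeta => -[-> ->].
rewrite [gS n]lock [gB n]lock !wsubst_cat !cl_cat !phiV' !phiSL !phiBL -!qmulA; exact: D11.
Qed.

End TBSec.

Theorem theorem9 (n : nat) (hn : 4 <= n) :
  (forall u v : word (ggen n), Geq n u v -> TBeq n (wsubst (@phi_gen n) u) (wsubst (@phi_gen n) v)) /\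
  (forall u v : word (tbgen n), TBeq n u v -> Geq n (wsubst (@psi_gen n) u) (wsubst (@psi_gen n) v)) /\
  (forall w : word (ggen n), Geq n (wsubst (@psi_gen n) (wsubst (@phi_gen n) w)) w) /\
  (forall w : word (tbgen n), TBeq n (wsubst (@phi_gen n) (wsubst (@psi_gen n) w)) w).
Proof.
split; first exact: part1.
split; first exact: part2.
split; first exact: part3.
exact: part4.
Qed.
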